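(* Let $n\ge1$, let $G$ be a simple graph on $[n]$, and let $\mathcal{S}_{n,G}$ be the arrangement in $\mathbb{R}^n$ consisting of the hyperplanes $x_i-x_j=0$ for all $1\le i<j\le n$ and $x_i-x_j=1$ for all $1\le i<j\le n$ with $\{i,j\}\in G$. The map $\sigma_{n,G}$ (defined below) is a bijection between the regions of $\mathcal{S}_{n,G}$ and the parking functions $f=(a_1,\ldots,a_n)$ on $[n]$ satisfying the following condition: for every $i$, if there exists $j>i$ with $a_i=a_j$ and $j$ is the smallest such integer, then $\{i,j\}\in G$.
   Context: A region of an arrangement is a connected component of the complement of the union of its hyperplanes. A parking function on $[n]$ is a map $f:[n]\to[n]$, written $(a_1,\ldots,a_n)$ with $a_i=f(i)$, such that $|f^{-1}(\{1,\ldots,j\})|\ge j$ for all $1\le j\le n$. For a region $R$ of $\mathcal{S}_{n,G}$, let $w=w_1\cdots w_n$ be the unique permutation of $[n]$ with $x_{w_1}>\cdots>x_{w_n}$ on $R$; the position of $m$ is the index $p$ with $w_p=m$. Draw an arc from $i$ to $j$ whenever $i<j$, $\{i,j\}\in G$, and $x_i-x_j>1$ holds on $R$. Then remove every arc $(i,l)$ for which there is a different arc $(j,k)$ with $i$ weakly left of $j$ and $k$ weakly left of $l$ in $w$. The remaining arcs partition $[n]$ into chains (connected components) of increasing integers. The map $\sigma_{n,G}$ sends $R$ to $f$ with $f(i)$ equal to the position in $w$ of the leftmost element of the chain containing $i$. *)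

(* Defs.v *)
From HB Require Import structures.
From mathcomp Require Import all_boot all_order all_algebra.
From mathcomp Require Import all_classical all_reals all_analysis.
Set Implicit Arguments. Unset Strict Implicit. Unset Printing Implicit Defensive.
Import Order.TTheory GRing.Theory Num.Theory.
Import numFieldNormedType.Exports.
Local Open Scope ring_scope.

(* Points of R^n are row vectors x : 'rV[R]_n, coordinate x_i is x ord0 i;
   the index set [n] = {1..n} is represented by 'I_n = {0..n-1}.
   A simple graph G on [n] is a symmetric irreflexive relation on 'I_n. *)

Section Shi.
Variables (R : realType) (n : nat) (G : rel 'I_n).

Definition shi_complement : set 'rV[R]_n :=
  [set x | forall i j : 'I_n, (i < j)%N ->
     x ord0 i - x ord0 j != 0 /\ (G i j -> x ord0 i - x ord0 j != 1)].

Definition shi_region (x : 'rV[R]_n) : set 'rV[R]_n :=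
  connected_component shi_complement x.

Variable x : 'rV[R]_n.

Definition word : seq 'I_n := sort (fun a b => x ord0 b <= x ord0 a) (enum 'I_n).

Definition pos (m : 'I_n) : nat := (index m word).+1.

Definition arc (i j : 'I_n) : bool :=
  [&& (i < j)%N, G i j & 1 < x ord0 i - x ord0 j].

Definition kept (i l : 'I_n) : bool :=
  arc i l && ~~ [exists j : 'I_n, exists k : 'I_n,
     [&& arc j k, (j, k) != (i, l), (pos i <= pos j)%N & (pos k <= pos l)%N]].

Definition same_chain (i j : 'I_n) : bool :=
  connect (fun a b => kept a b || kept b a) i j.

Definition sigma (i : 'I_n) : nat :=
  \big[minn/n]_(j | same_chain i j) pos j.

End Shi.

Definition parking_function (n : nat) (f : 'I_n -> nat) : Prop :=
  (forall i, (1 <= f i <= n)%N) /\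
  (forall j : nat, (1 <= j <= n)%N -> (j <= #|[set i : 'I_n | (f i <= j)%N]|)%N).

Definition G_compatible (n : nat) (G : rel 'I_n) (f : 'I_n -> nat) : Prop :=
  forall i j : 'I_n, (i < j)%N -> f i = f j ->
    (forall k : 'I_n, (i < k < j)%N -> f k <> f i) -> G i j.

(* Main.v *)
Require Import Defs.
From HB Require Import structures.
From mathcomp Require Import all_boot all_order all_algebra.
From mathcomp Require Import all_classical all_reals all_analysis.
From mathcomp Require Import lra ring zify.
Import Order.TTheory GRing.Theory Num.Theory.
Import numFieldNormedType.Exports.
Local Open Scope ring_scope.

Section Topo.
Local Open Scope classical_set_scope.

Lemma coord_continuous (R : realType) n (i j : 'I_n) :
  continuous (fun z : 'rV[R]_n => z ord0 i - z ord0 j).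
Proof.
move=> u; apply: continuousB.
  move=> A /nbhs_ballP[e /= e0 eA].
  apply/nbhs_ballP; exists e => //= v [_ uv]; apply: eA; exact: uv.
move=> A /nbhs_ballP[e /= e0 eA].
apply/nbhs_ballP; exists e => //= v [_ uv]; apply: eA; exact: uv.
Qed.

Lemma seg_continuous (R : realType) n (x y : 'rV[R]_n) :
  continuous (fun t : R => x + t *: (y - x)).
Proof.
move=> t.
have h := (@continuousD R _ R (fun=> x) (fun t => t *: (y - x)) t).
apply: h; first exact: cst_continuous.
apply: continuousZr_tmp. by move=> s; apply: cvg_id.
Qed.

Lemma comp_sign (R : realType) n (G : rel 'I_n) (x y : 'rV[R]_n) (i j : 'I_n) (c : R) :
  shi_complement G x -> shi_region G x y ->
  (forall z, shi_complement G z -> z ord0 i - z ord0 j != c) ->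
  (c < x ord0 i - x ord0 j) = (c < y ord0 i - y ord0 j).
Proof.
move=> Cx Rxy Hc.
set g := fun z : 'rV[R]_n => z ord0 i - z ord0 j.
have cI : connected (g @` shi_region G x).
  apply: connected_continuous_connected; first exact: component_connected.
  apply: continuous_subspaceT; exact: coord_continuous.
have /connected_intervalP iI := cI.
have gx : (g @` shi_region G x) (g x) by exists x => //; exact: connected_component_refl.
have gy : (g @` shi_region G x) (g y) by exists y.
have nin : ~ (g @` shi_region G x) c.
  move=> [z /connected_component_sub Cz gz]; by move: (Hc z Cz); rewrite -/(g z) gz eqxx.
have gxc : g x != c by apply: Hc.
have gyc : g y != c by apply: Hc; exact: (connected_component_sub Rxy).
rewrite -/(g x) -/(g y).
case: (ltgtP c (g x)) gxc => // hx _; case: (ltgtP c (g y)) gyc => // hy _.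
- exfalso; apply: nin; apply: (iI _ _ gy gx); by rewrite !ltW.
- exfalso; apply: nin; apply: (iI _ _ gx gy); by rewrite !ltW.
Qed.

Lemma conv_side (R : realType) (a b c t : R) : 0 <= t <= 1 ->
  (c < a) = (c < b) -> a != c -> b != c -> a + t * (b - a) != c.
Proof.
move=> /andP[t0 t1] E ac bc.
case: (ltgtP c a) E ac => // ha E _; case: (ltgtP c b) E bc => // hb _ _.
- rewrite gt_eqF //.
  case: (lerP a b) => hab.
    have : 0 <= t * (b - a) by apply: mulr_ge0; lra.
    lra.
  have : 0 <= (1 - t) * (a - b) by apply: mulr_ge0; lra.
  lra.
- rewrite lt_eqF //.
  case: (lerP a b) => hab.
    have : 0 <= (1 - t) * (b - a) by apply: mulr_ge0; lra.
    lra.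
  have : 0 <= t * (a - b) by apply: mulr_ge0; lra.
  lra.
Qed.

Lemma signs_region (R : realType) n (G : rel 'I_n) (x y : 'rV[R]_n) :
  shi_complement G x -> shi_complement G y ->
  (forall i j : 'I_n, (i < j)%N -> (0 < x ord0 i - x ord0 j) = (0 < y ord0 i - y ord0 j)) ->
  (forall i j : 'I_n, (i < j)%N -> G i j -> (1 < x ord0 i - x ord0 j) = (1 < y ord0 i - y ord0 j)) ->
  shi_region G x y.
Proof.
move=> Cx Cy S0 S1.
set h := fun t : R => x + t *: (y - x).
have sub : h @` `[0, 1] `<=` shi_complement G.
  move=> z [t /= tI <-] i j ij.
  have tI' : 0 <= t <= 1 by move: tI; rewrite in_itv.
  have -> : h t ord0 i - h t ord0 j = (x ord0 i - x ord0 j) + t * ((y ord0 i - y ord0 j) - (x ord0 i - x ord0 j)).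
    by rewrite /h !mxE; ring.
  have [xi1 xi2] := Cx i j ij; have [yi1 yi2] := Cy i j ij.
  split; first by apply: conv_side => //; exact: S0.
  move=> Gij; apply: conv_side => //; [exact: S1|exact: xi2|exact: yi2].
have con : connected (h @` `[0, 1]).
  apply: connected_continuous_connected; first exact: segment_connected.
  apply: continuous_subspaceT; exact: seg_continuous.
have hx : (h @` `[0, 1]) x.
  exists 0; first by rewrite /= in_itv /= lexx ler01.
  by rewrite /h scale0r addr0.
apply: (connected_component_max hx sub con).
exists 1; first by rewrite /= in_itv /= lexx ler01.
by rewrite /h scale1r addrC subrK.
Qed.

End Topo.

Set Implicit Arguments. Unset Strict Implicit.

Lemma connect_mono (T : finType) (e r : rel T) :
  reflexive r -> transitive r -> (forall a b, e a b -> r a b) ->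
  forall a b, connect e a b -> r a b.
Proof.
move=> rr rt er a b /connectP[p pth ->] {b}.
elim: p a pth => [|c p IH] a /=; first by move=> _; exact: rr.
by move=> /andP[eac pth]; apply: rt (er _ _ eac) (IH c pth).
Qed.

Lemma connect_first (T : finType) (e : rel T) a b :
  connect e a b -> a != b -> exists2 d, e a d & connect e d b.
Proof.
move=> /connectP[[|c p] /= pth ->]; first by rewrite eqxx.
move: pth => /andP[eac pth] _; exists c => //; apply/connectP; by exists p.
Qed.

Lemma connect_last (T : finType) (e : rel T) a b :
  connect e a b -> a != b -> exists2 d, connect e a d & e d b.
Proof.
move=> /connectP[p pth ->]; elim/last_ind: p pth => [|p c _] /=; first by rewrite eqxx.
rewrite rcons_path last_rcons => /andP[pth ec] _.
exists (last a p) => //; apply/connectP; by exists p.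
Qed.

Arguments connect_first {T e a b}.
Arguments connect_last {T e a b}.

Lemma bigmin_ex (I : finType) (Pr : pred I) (F : I -> nat) N i0 :
  Pr i0 -> (forall i, Pr i -> (F i <= N)%N) ->
  exists2 m, Pr m & (\big[minn/N]_(i | Pr i) F i = F m) /\
                    (forall j, Pr j -> (F m <= F j)%N).
Proof.
move=> P0 HN.
have lb : forall j, Pr j -> (\big[minn/N]_(i | Pr i) F i <= F j)%N.
  move=> j Pj; rewrite -big_filter.
  have : j \in [seq i <- index_enum I | Pr i] by rewrite mem_filter Pj mem_index_enum.
  elim: [seq i <- index_enum I | Pr i] => // a s IH; rewrite big_cons inE.
  case/orP => [/eqP <-|js]; first exact: geq_minl.
  by apply: leq_trans (IH js); exact: geq_minr.
have : \big[minn/N]_(i | Pr i) F i = N \/ exists2 m, Pr m & F m = \big[minn/N]_(i | Pr i) F i.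
  elim/big_ind: _ => [|a b Ha Hb|i Pi]; [by left| |by right; exists i].
  rewrite /minn; by case: ifP.
case=> [E|[m Pm E]].
  exists i0 => //; split.
    by apply/eqP; rewrite eqn_leq lb // E HN.
  move=> j Pj; have := lb j Pj; rewrite E => h.
  by apply: leq_trans (HN _ P0) h.
exists m => //; split => // j Pj; rewrite E; exact: lb.
Qed.

Definition Kf n (f : 'I_n -> nat) (i l : 'I_n) : bool :=
  [&& (i < l)%N, f i == f l & [forall k : 'I_n, ((i < k < l)%N) ==> (f k != f i)]].

Definition start n (f : 'I_n -> nat) (s : 'I_n) : bool :=
  [forall k : 'I_n, (k < s)%N ==> (f k != f s)].

Arguments Kf {n}.
Arguments start {n}.

Section KfTheory.
Variables (n : nat) (f : 'I_n -> nat).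

Lemma Kf_out i l l' : Kf f i l -> Kf f i l' -> l = l'.
Proof.
move=> /and3P[il /eqP fil /forallP H] /and3P[il' /eqP fil' /forallP H'].
case: (ltngtP l l') => [ll|ll|/val_inj //].
  by move: (H' l); rewrite il ll fil eqxx.
by move: (H l'); rewrite il' ll fil' eqxx.
Qed.

Lemma Kf_in i i' l : Kf f i l -> Kf f i' l -> i = i'.
Proof.
move=> /and3P[il /eqP fil /forallP H] /and3P[il' /eqP fil' /forallP H'].
case: (ltngtP i i') => [ll|ll|/val_inj //].
  by move: (H i'); rewrite il' ll fil -fil' eqxx.
by move: (H' i); rewrite il ll fil' -fil eqxx.
Qed.

Lemma Kf_start i l : Kf f i l -> ~~ start f l.
Proof.
move=> /and3P[il /eqP fil _]; apply/forallP => /(_ i); by rewrite il fil eqxx.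
Qed.

Lemma Kf_pred e : ~~ start f e -> exists i, Kf f i e.
Proof.
move=> /forallPn[k0]; rewrite negb_imply negbK => /andP[k0e /eqP fk0].
pose Pr := fun k : 'I_n => (k < e)%N && (f k == f e).
have P0 : Pr k0 by rewrite /Pr k0e fk0 eqxx.
case: (@arg_maxnP _ k0 Pr (fun k : 'I_n => nat_of_ord k) P0) => i /andP[ie /eqP fie] imax.
exists i; apply/and3P; split => //; first by rewrite fie.
apply/forallP => k; apply/implyP => /andP[ik ke]; apply/negP => /eqP fk.
have : Pr k by rewrite /Pr ke fk fie eqxx.
by move/imax => /=; rewrite leqNgt ik.
Qed.

Lemma start_ex v (e : 'I_n) : f e = v -> exists2 s, start f s & f s = v.
Proof.
move=> fe.
pose Pr := fun k : 'I_n => f k == v.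
have P0 : Pr e by rewrite /Pr fe.
case: (@arg_minnP _ e Pr (fun k : 'I_n => nat_of_ord k) P0) => s /eqP fs smin.
exists s => //; apply/forallP => k; apply/implyP => ks; apply/negP => /eqP fk.
have : Pr k by rewrite /Pr fk fs.
by move/smin => /=; rewrite leqNgt ks.
Qed.

Lemma Kf_ind (Q : 'I_n -> Prop) :
  (forall s, start f s -> Q s) -> (forall i l, Kf f i l -> Q i -> Q l) ->
  forall e, Q e.
Proof.
move=> Hs Hk e; have [m] := ubnP e; elim: m e => // m IH e em.
case: (boolP (start f e)) => [/Hs //|/Kf_pred [i Kie]].
apply: (Hk i) => //; apply: IH; move: Kie => /and3P[ie _ _].
exact: (leq_trans ie em).
Qed.

End KfTheory.


Section Fwd.
Variables (R : realType) (n : nat) (G : rel 'I_n) (x : 'rV[R]_n).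
Hypothesis Cx : shi_complement G x.

Local Notation P := (Defs.pos x).
Local Notation X i := (x ord0 i).

Lemma xdist i j : i != j -> X i != X j.
Proof.
move=> ij; case: (ltngtP i j) => [h|h|/val_inj e]; last by rewrite e eqxx in ij.
  by have [+ _] := Cx h; rewrite subr_eq0.
by have [+ _] := Cx h; rewrite subr_eq0 eq_sym.
Qed.

Lemma word_uniq : uniq (word x).
Proof. by rewrite /word sort_uniq enum_uniq. Qed.

Lemma mem_word e : e \in word x.
Proof. by rewrite /word mem_sort mem_enum. Qed.

Lemma size_word : size (word x) = n.
Proof. by rewrite /word size_sort size_enum_ord. Qed.

Lemma pos_inj : injective P.
Proof.
move=> i j; rewrite /pos => -[] h.
exact: (index_inj i (mem_word i) (mem_word j) h).
Qed.

Lemma pos_range e : (1 <= P e <= n)%N.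
Proof. by rewrite /pos ltnS /=; have := index_mem e (word x); rewrite mem_word size_word. Qed.

Lemma word_sorted : sorted (fun a b => X b <= X a) (word x).
Proof.
apply: sort_sorted => a b; exact: le_total.
Qed.

Lemma pos_ltP i j : (P i < P j)%N = (X j < X i).
Proof.
have tr : transitive (fun a b : 'I_n => X b <= X a).
  by move=> b a c /= h1 h2; apply: le_trans h2 h1.
have key : forall a b, (P a < P b)%N -> X b <= X a.
  move=> a b; rewrite /pos ltnS => h.
  exact: (sorted_ltn_index tr word_sorted a b (mem_word a) (mem_word b) h).
apply/idP/idP => [h|h].
  have ij : i != j by apply/eqP => e; rewrite e ltnn in h.
  by rewrite lt_neqAle key // andbT; apply: xdist; rewrite eq_sym.
case: (ltngtP (P i) (P j)) => // [h'|/pos_inj e].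
  by have := key _ _ h'; rewrite leNgt h.
by rewrite e ltxx in h.
Qed.

Lemma pos_leP i j : (P i <= P j)%N = (X j <= X i).
Proof. by rewrite leqNgt pos_ltP -leNgt. Qed.

Lemma card_pos_le j : (j <= n)%N -> #|[set e | (P e <= j)%N]| = j.
Proof.
move=> jn.
have -> : [set e | (P e <= j)%N] = [set e | e \in take j (word x)].
  apply/setP => e; rewrite !inE in_take ?mem_word //.
by rewrite cardsE (card_uniqP _) ?take_uniq ?word_uniq // size_take size_word
   (ltn_neqAle j n) jn andbT; case: eqP => // ->.
Qed.

Local Notation Ar := (Defs.arc G x).
Local Notation kp := (Defs.kept G x).

Lemma arcP i l : Ar i l -> (i < l)%N /\ G i l /\ (P i < P l)%N.
Proof.
move=> /and3P[il Gil d]; split => //; rewrite pos_ltP.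
have : 0 < X i - X l by apply: lt_trans d.
by rewrite subr_gt0.
Qed.

Lemma arc_up i l j k : Ar j k -> (P i <= P j)%N -> (P k <= P l)%N ->
  (i < l)%N -> G i l -> Ar i l.
Proof.
move=> /and3P[_ _ d] + + il Gil; rewrite !pos_leP => h1 h2.
apply/and3P; split => //.
apply: (lt_le_trans d); lra.
Qed.

Lemma kept_arc i l : kp i l -> Ar i l.
Proof. by case/andP. Qed.

Lemma kept_no i l j k : kp i l -> Ar j k -> (P i <= P j)%N -> (P k <= P l)%N ->
  (j, k) = (i, l).
Proof.
move=> /andP[_ /existsPn H] Ajk h1 h2; move: (H j) => /existsPn /(_ k).
rewrite Ajk h1 h2 andbT /= => /negP; by case: eqP.
Qed.

Lemma kept_out i l l' : kp i l -> kp i l' -> l = l'.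
Proof.
move=> k1 k2; case: (leqP (P l) (P l')) => h.
  by have [] := kept_no k2 (kept_arc k1) (leqnn _) h.
by have [] := kept_no k1 (kept_arc k2) (leqnn _) (ltnW h).
Qed.

Lemma kept_in i i' l : kp i l -> kp i' l -> i = i'.
Proof.
move=> k1 k2; case: (leqP (P i) (P i')) => h.
  by have [] := kept_no k1 (kept_arc k2) h (leqnn _).
by have [] := kept_no k2 (kept_arc k1) (ltnW h) (leqnn _).
Qed.

Lemma kept_mono i l j k : kp i l -> kp j k -> (P i < P j)%N -> (P l < P k)%N.
Proof.
move=> k1 k2 h; rewrite ltnNge; apply/negP => h'.
have [e1 _] := kept_no k1 (kept_arc k2) (ltnW h) h'.
by rewrite e1 ltnn in h.
Qed.

Lemma kept_lt i l : kp i l -> (i < l)%N /\ (P i < P l)%N.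
Proof. by move/kept_arc/arcP => [? [? ?]]. Qed.

Local Notation D := (connect kp).

Lemma D_mono a b : D a b -> (a <= b)%N && (P a <= P b)%N.
Proof.
move: a b; apply: (@connect_mono _ kp (fun a b : 'I_n => (a <= b)%N && (P a <= P b)%N)).
- by move=> c; rewrite !leqnn.
- move=> b' a' c /andP[h1 h2] /andP[h3 h4].
  by rewrite (leq_trans h1 h3) (leq_trans h2 h4).
- by move=> c d /kept_lt [h1 h2]; rewrite (ltnW h1) (ltnW h2).
Qed.

Local Notation sc := (Defs.same_chain G x).

Lemma sc_sym : symmetric sc.
Proof. by apply: sym_connect_sym => a b /=; rewrite orbC. Qed.

Lemma sc_trans : transitive sc.
Proof. exact: connect_trans. Qed.

Lemma D_sc a b : D a b -> sc a b.
Proof.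
move: a b; apply: (@connect_mono _ _ sc); [exact: connect0|exact: sc_trans|].
by move=> c d h; apply: connect1; rewrite /= h.
Qed.

Lemma Dtot a b : sc a b -> D a b \/ D b a.
Proof.
move=> /connectP[p pth ->] {b}.
elim: p a pth => [|c p IH] a /=; first by left.
move=> /andP[eac /IH []] h; set b := last c p in h *.
- case/orP: eac => [kac|kca].
    by left; apply: connect_trans (connect1 kac) h.
  case: (eqVneq c b) => [cb|cb].
    by right; rewrite -cb; apply: connect1.
  have [d kcd Ddb] := connect_first h cb.
  by left; rewrite (kept_out kca kcd).
- case/orP: eac => [kac|kca].
    case: (eqVneq b c) => [bc|bc].
      by left; rewrite bc; apply: connect1.
    have [d Dbd kdc] := connect_last h bc.
    by right; rewrite (kept_in kac kdc).
  by right; apply: connect_trans h (connect1 kca).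
Qed.

Local Notation f := (Defs.sigma G x).

Lemma sigma_min i : exists2 m, sc i m & f i = P m /\ (forall j, sc i j -> (P m <= P j)%N).
Proof.
have [m Hm [E Hmin]] := @bigmin_ex _ (sc i) P n i (connect0 _ i)
  (fun j _ => proj2 (andP (pos_range j))).
by exists m => //; split.
Qed.

Lemma sigma_sc i j : sc i j -> f i = f j.
Proof.
move=> ij; rewrite /Defs.sigma; apply: eq_bigl => k; apply/idP/idP => h.
  by apply: sc_trans h; rewrite sc_sym.
exact: sc_trans ij h.
Qed.

Lemma sc_sigma i j : f i = f j -> sc i j.
Proof.
have [mi Hi [Ei _]] := sigma_min i; have [mj Hj [Ej _]] := sigma_min j.
rewrite Ei Ej => /pos_inj e; subst mj.
by apply: sc_trans Hi _; rewrite sc_sym.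
Qed.

Lemma sc_sigmaE i j : sc i j = (f i == f j).
Proof. apply/idP/eqP; [exact: sigma_sc|exact: sc_sigma]. Qed.

Lemma kept_Kf i l : kp i l = Kf f i l.
Proof.
apply/idP/idP => [kil|].
  have [il _] := kept_lt kil.
  have scil : sc i l by apply: D_sc; apply: connect1.
  apply/and3P; split => //; first by rewrite (sigma_sc scil).
  apply/forallP => k; apply/implyP => /andP[ik kl]; apply/negP => /eqP /esym /sc_sigma sik.
  case: (Dtot sik) => [Dik|Dki].
    have ik' : i != k by rewrite neq_ltn ik.
    have [d kid Ddk] := connect_first Dik ik'.
    rewrite -(kept_out kil kid) in Ddk.
    by move: (D_mono Ddk) => /andP[]; rewrite leqNgt kl.
  by move: (D_mono Dki) => /andP[]; rewrite leqNgt ik.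
move=> /and3P[il /eqP fil /forallP H].
have scil := sc_sigma fil.
case: (Dtot scil) => [Dil|Dli]; last first.
  by move: (D_mono Dli) => /andP[]; rewrite leqNgt il.
have il' : i != l by rewrite neq_ltn il.
have [d kid Ddl] := connect_first Dil il'.
have [id _] := kept_lt kid.
move: (D_mono Ddl) => /andP[dl _].
case: (ltngtP d l) dl => // [dl _|/val_inj e _]; last by rewrite -e.
have sid : sc i d by apply: D_sc; apply: connect1.
by move: (H d); rewrite id dl /= (sigma_sc sid) eqxx.
Qed.

Lemma start_pos s : start f s -> P s = f s.
Proof.
move=> /forallP Hs.
have [m Hm [E Hmin]] := sigma_min s.
rewrite E; congr (P _).
case: (Dtot Hm) => [Dsm|Dms].
  move: (D_mono Dsm) => /andP[_ h].
  by apply: pos_inj; apply/eqP; rewrite eqn_leq h (Hmin s (connect0 _ s)).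
move: (D_mono Dms) => /andP[h _].
case: (ltngtP m s) h => // [ms _|/val_inj -> //].
by move: (Hs m); rewrite ms /= (sigma_sc Hm) eqxx.
Qed.

Lemma Kf_mono i l j k : Kf f i l -> Kf f j k -> (P i < P j)%N -> (P l < P k)%N.
Proof. rewrite -!kept_Kf; exact: kept_mono. Qed.

Lemma Kf_lt i l : Kf f i l -> (P i < P l)%N.
Proof. by rewrite -kept_Kf => /kept_lt []. Qed.

Lemma arc_char i l : Ar i l = [&& (i < l)%N, G i l &
   [exists j, exists k, [&& Kf f j k, (P i <= P j)%N & (P k <= P l)%N]]].
Proof.
apply/idP/idP; last first.
  move=> /and3P[il Gil /existsP[j /existsP[k /and3P[Kjk h1 h2]]]].
  rewrite -kept_Kf in Kjk.
  exact: arc_up (kept_arc Kjk) h1 h2 il Gil.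
move=> Ail; have [il [Gil _]] := arcP Ail; rewrite il Gil /=.
have [m] := ubnP (P l - P i); elim: m i l Ail {il Gil} => // m IH i l Ail hm.
case: (boolP (kp i l)) => [kil|].
  by apply/existsP; exists i; apply/existsP; exists l; rewrite -kept_Kf kil !leqnn.
rewrite /Defs.kept Ail /= negbK => /existsP[j /existsP[k /and4P[Ajk ne h1 h2]]].
have [_ [_ jk]] := arcP Ajk.
have [_ [_ il]] := arcP Ail.
have : (P k - P j < m)%N.
  rewrite -ltnS; apply: leq_trans hm; rewrite ltnS.
  have : (P j != P i) || (P k != P l).
    rewrite -negb_and; apply/negP => /andP[/eqP/pos_inj e1 /eqP/pos_inj e2].
    by rewrite e1 e2 eqxx in ne.
  case/orP => [h|h].
    have h1' : (P i < P j)%N by rewrite ltn_neqAle eq_sym h h1.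
    move: h1' h2 jk; clear; lia.
  have h2' : (P k < P l)%N by rewrite ltn_neqAle h h2.
  move: h2' h1 jk; clear; lia.
move=> /(IH _ _ Ajk) /existsP[j' /existsP[k' /and3P[K' h1' h2']]].
apply/existsP; exists j'; apply/existsP; exists k'.
by rewrite K' (leq_trans h1 h1') (leq_trans h2' h2).
Qed.

Lemma sigma_le_pos e : (f e <= P e)%N.
Proof. by have [m _ [-> H]] := sigma_min e; apply: H; exact: connect0. Qed.

Lemma sigma_parking : parking_function f.
Proof.
split.
  move=> i; have [m _ [-> _]] := sigma_min i; exact: pos_range.
move=> j /andP[j1 jn]; rewrite -{1}(card_pos_le jn).
apply: subset_leq_card; apply/fintype.subsetP => e; rewrite !inE => h.
exact: leq_trans (sigma_le_pos e) h.
Qed.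

Lemma sigma_compat : G_compatible G f.
Proof.
move=> i j ij fij H.
have Kij : Kf f i j.
  apply/and3P; split => //; first by rewrite fij.
  apply/forallP => k; apply/implyP => /H; by move/eqP.
by rewrite -kept_Kf in Kij; have [_ [Gij _]] := arcP (kept_arc Kij).
Qed.

End Fwd.


Section Uniq.
Variables (R : realType) (n : nat) (G : rel 'I_n).

Lemma Kf_ext (f g : 'I_n -> nat) : f =1 g -> Kf f =2 Kf g.
Proof.
move=> E i l; rewrite /Kf !E; congr [&& _, _ & _].
by apply: eq_forallb => k; rewrite !E.
Qed.

Lemma start_ext (f g : 'I_n -> nat) : f =1 g -> start f =1 start g.
Proof. by move=> E s; rewrite /start; apply: eq_forallb => k; rewrite !E. Qed.

Lemma pos_surj (x : 'rV[R]_n) (a : 'I_n) p : shi_complement G x ->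
  (1 <= p <= n)%N -> exists b, Defs.pos x b = p.
Proof.
move=> Cx /andP[p1 pn]; exists (nth a (word x) p.-1).
rewrite /Defs.pos index_uniq; first by rewrite prednK.
  by rewrite size_word prednK.
exact: word_uniq x.
Qed.

Lemma uniq_core (x y : 'rV[R]_n) a :
  shi_complement G x -> shi_complement G y -> Defs.sigma G x =1 Defs.sigma G y ->
  (forall e, (Defs.pos x e < Defs.pos x a)%N -> Defs.pos x e = Defs.pos y e) ->
  (forall e, (Defs.pos y e < Defs.pos x a)%N -> Defs.pos x e = Defs.pos y e) ->
  (Defs.pos x a < Defs.pos y a)%N -> False.
Proof.
move=> Cx Cy E H1 H2 lt.
set f := Defs.sigma G x.
have KE := Kf_ext E.
have [b Eb] := @pos_surj y a (Defs.pos x a) Cy (pos_range x a).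
have ba : b != a by apply/eqP => e; rewrite e in Eb; rewrite Eb ltnn in lt.
have xb : (Defs.pos x a < Defs.pos x b)%N.
  case: (ltngtP (Defs.pos x a) (Defs.pos x b)) => // [h|/pos_inj e].
    by have := H1 _ h; rewrite Eb => e; rewrite e ltnn in h.
  by rewrite e eqxx in ba.
have [i Kia] : exists i, Kf f i a.
  apply: Kf_pred; apply/negP => sa.
  have := start_pos Cx sa; have := start_ext E a; rewrite sa => /esym sa'.
  have := start_pos Cy sa'; rewrite -E => <- e.
  by rewrite e ltnn in lt.
have [j Kjb] : exists j, Kf f j b.
  apply: Kf_pred; apply/negP => sb.
  have := start_pos Cx sb; have := start_ext E b; rewrite sb => /esym sb'.
  have := start_pos Cy sb'; rewrite -E => <- e.
  by rewrite e Eb ltnn in xb.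
have ij : i != j by apply/eqP => e; rewrite e in Kia; rewrite (Kf_out Kia Kjb) eqxx in ba.
have ei : Defs.pos x i = Defs.pos y i by apply: H1; exact: (Kf_lt Cx Kia).
have ej : Defs.pos x j = Defs.pos y j.
  apply: H2; rewrite -Eb; apply: (Kf_lt Cy); by rewrite -KE.
have xij : (Defs.pos x i < Defs.pos x j)%N.
  case: (ltngtP (Defs.pos x i) (Defs.pos x j)) => // [h|/pos_inj e].
    by have := Kf_mono Cx Kjb Kia h; rewrite ltnNge (ltnW xb).
  by rewrite e eqxx in ij.
have yji : (Defs.pos y j < Defs.pos y i)%N.
  case: (ltngtP (Defs.pos y j) (Defs.pos y i)) => // [h|/pos_inj e].
    have Kia' : Kf (Defs.sigma G y) i a by rewrite -KE.
    have Kjb' : Kf (Defs.sigma G y) j b by rewrite -KE.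
    by have := Kf_mono Cy Kia' Kjb' h; rewrite Eb ltnNge (ltnW lt).
  by rewrite e eqxx in ij.
by move: xij; rewrite ei ej ltnNge (ltnW yji).
Qed.

Lemma pos_unique (x y : 'rV[R]_n) :
  shi_complement G x -> shi_complement G y -> Defs.sigma G x =1 Defs.sigma G y ->
  Defs.pos x =1 Defs.pos y.
Proof.
move=> Cx Cy E e0; apply/eqP; apply/negPn/negP => ne.
pose S := fun e => Defs.pos x e != Defs.pos y e.
pose F := fun e => minn (Defs.pos x e) (Defs.pos y e).
case: (@arg_minnP _ e0 S F ne) => a Sa amin.
have H : forall e, (F e < F a)%N -> Defs.pos x e = Defs.pos y e.
  move=> e h; apply/eqP; apply/negPn/negP => Se.
  by have := amin e Se; rewrite leqNgt h.
rewrite /S in Sa.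
case: (ltngtP (Defs.pos x a) (Defs.pos y a)) Sa => // [h|h] _.
- apply: (@uniq_core x y a Cx Cy E) => // e he; apply: H; rewrite /F.
    by rewrite (minn_idPl (ltnW h)); apply: leq_ltn_trans he; exact: geq_minl.
  by rewrite (minn_idPl (ltnW h)); apply: leq_ltn_trans he; exact: geq_minr.
- have E' : Defs.sigma G y =1 Defs.sigma G x by move=> i; rewrite E.
  apply: (@uniq_core y x a Cy Cx E') => // e he; apply/esym; apply: H; rewrite /F.
    by rewrite (minn_idPr (ltnW h)); apply: leq_ltn_trans he; exact: geq_minr.
  by rewrite (minn_idPr (ltnW h)); apply: leq_ltn_trans he; exact: geq_minl.
Qed.

End Uniq.

Section Signs.
Variables (R : realType) (n : nat) (G : rel 'I_n).

Definition Signs (x y : 'rV[R]_n) :=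
  (forall i j : 'I_n, (i < j)%N -> (0 < x ord0 i - x ord0 j) = (0 < y ord0 i - y ord0 j)) /\
  (forall i j : 'I_n, (i < j)%N -> G i j -> (1 < x ord0 i - x ord0 j) = (1 < y ord0 i - y ord0 j)).

Lemma sigma_signs (x y : 'rV[R]_n) : shi_complement G x -> shi_complement G y ->
  Signs x y -> Defs.sigma G x =1 Defs.sigma G y.
Proof.
move=> Cx Cy [S0 S1].
have key : forall z : 'rV[R]_n, shi_complement G z -> forall a b : 'I_n, (a < b)%N ->
    (z ord0 b <= z ord0 a) = (0 < z ord0 a - z ord0 b).
  move=> z Cz a b ab.
  have ne : b != a by rewrite neq_ltn ab orbT.
  have nd : z ord0 b != z ord0 a := xdist Cz ne.
  by rewrite subr_gt0 le_eqVlt (negbTE nd).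
have Ew : word x = word y.
  rewrite /word; congr sort; apply/funext => a; apply/funext => b.
  case: (ltngtP a b) => [ab|ba|/val_inj ->]; last by rewrite !lexx.
    by rewrite (key x Cx _ _ ab) (key y Cy _ _ ab) S0.
  have ne : a != b by rewrite neq_ltn ba orbT.
  by rewrite !leNgt !lt_neqAle (xdist Cx ne) (xdist Cy ne) /= (key x Cx _ _ ba) (key y Cy _ _ ba) S0.
have Ep : Defs.pos x = Defs.pos y by apply/funext => e; rewrite /Defs.pos Ew.
have Ea : Defs.arc G x = Defs.arc G y.
  apply/funext => i; apply/funext => l; rewrite /Defs.arc.
  case: (boolP (i < l)%N) => //= il; case: (boolP (G i l)) => //= Gil.
  exact: S1.
have Ek : Defs.kept G x = Defs.kept G y.
  by apply/funext => i; apply/funext => l; rewrite /Defs.kept Ea Ep.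
by move=> i; rewrite /Defs.sigma /Defs.same_chain Ek Ep.
Qed.

Lemma sigma_inj_signs (x y : 'rV[R]_n) : shi_complement G x -> shi_complement G y ->
  Defs.sigma G x =1 Defs.sigma G y -> Signs x y.
Proof.
move=> Cx Cy E.
have Ep := pos_unique Cx Cy E.
split => i j ij.
  by rewrite !subr_gt0 -(pos_ltP Cx) -(pos_ltP Cy) !Ep.
move=> Gij.
have := arc_char Cx i j; have := arc_char Cy i j.
rewrite /Defs.arc ij Gij /= => -> ->.
apply: eq_existsb => a; apply: eq_existsb => b.
by rewrite (Kf_ext E) !Ep.
Qed.

End Signs.


Definition thresh_ok (R : realType) (s : nat -> nat) (N : nat) (t : nat -> R) :=
  forall p q : nat, (1 <= p)%N -> (p < q)%N -> (q <= N)%N ->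
    [/\ t p < t q, ((p <= s q)%N -> 1 < t q - t p) & ((s q < p)%N -> t q - t p < 1)].

Lemma thresh_ex (R : realType) (s : nat -> nat) :
  (forall q, (1 <= q)%N -> (s q < q)%N) ->
  (forall q q', (q <= q')%N -> (s q <= s q')%N) ->
  forall N, exists t : nat -> R, thresh_ok s N t.
Proof.
move=> slt smono; elim=> [|N [t IH]].
  by exists (fun=> 0) => p q p1 pq; rewrite leqn0 => /eqP qe; move: pq; rewrite qe.
case: (posnP N) => [N0|Npos].
  exists t => p q p1 pq qN; exfalso; move: p1 pq qN; rewrite N0; lia.
set q := N.+1.
set u := if s q == 0%N then t N else t (s q) + 1.
set lo := if t N < u then u else t N.
set v := if (s q < N)%N then (lo + (t (s q).+1 + 1)) / 2 else lo + 1.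
have tmono : forall p p', (1 <= p)%N -> (p <= p')%N -> (p' <= N)%N -> t p <= t p'.
  move=> p p' p1; rewrite leq_eqVlt => /orP[/eqP -> //|pp' p'N].
  by have [h _ _] := IH _ _ p1 pp' p'N; apply: ltW.
have loN : t N <= lo by rewrite /lo; case: ifP => // /ltW.
have lou : u <= lo by rewrite /lo; case: ifP => // /negbT; rewrite -leNgt.
have lov : lo < v.
  rewrite /v; case: ifP => sN; last lra.
  suff : lo < t (s q).+1 + 1 by lra.
  have h1 : t N < t (s q).+1 + 1.
    move: sN; rewrite leq_eqVlt => /orP[/eqP <-|sN']; first lra.
    have [_ _ h] := IH _ _ (ltn0Sn _) sN' (leqnn N).
    have : (s N < (s q).+1)%N by rewrite ltnS; apply: smono.
    move/h; lra.
  have h2 : u < t (s q).+1 + 1.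
    rewrite /u; case: ifP => [_|/negbT]; first exact: h1.
    rewrite -lt0n => s0.
    have [h _ _] := IH _ _ s0 (ltnSn _) sN; lra.
  by rewrite /lo; case: ifP.
exists (fun r => if r == q then v else t r) => p q' p1 pq' q'N.
have pN : (p <= N)%N by move: pq' q'N; lia.
have pq : (p == q) = false by apply/negbTE; move: pq' q'N; rewrite /q; lia.
rewrite pq.
move: q'N; rewrite leq_eqVlt => /orP[/eqP eq'|q'N]; last first.
  have q'q : (q' == q) = false by apply/negbTE; move: q'N; rewrite /q; lia.
  rewrite q'q; exact: IH.
rewrite eq' eqxx.
have tpv : t p < v by apply: le_lt_trans (tmono _ _ p1 pN (leqnn _)) (le_lt_trans loN lov).
split => // [psq|sqp].
  have s0 : (s q == 0%N) = false by apply/negbTE; rewrite -lt0n; apply: leq_trans psq.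
  have : t (s q) + 1 <= lo by move: lou; rewrite /u s0.
  have : t p <= t (s q).
    apply: tmono => //; rewrite -ltnS; apply: leq_trans (slt _ (ltn0Sn _)) _; by [].
  lra.
have sN : (s q < N)%N by apply: leq_trans sqp pN.
have : v < t (s q).+1 + 1.
  rewrite /v sN; move: lov; rewrite /v sN; lra.
have : t (s q).+1 <= t p by apply: tmono.
lra.
Qed.


Section RC.
Variables (T : eqType).
Lemma mem_rc (ws : seq T) z e : (e \in rcons ws z) = (e == z) || (e \in ws).
Proof. by rewrite mem_rcons inE. Qed.
Lemma idx_old (ws : seq T) z e : e \in ws -> index e (rcons ws z) = index e ws.
Proof. by move=> h; rewrite -cats1 index_cat h. Qed.
Lemma idx_new (ws : seq T) z : z \notin ws -> index z (rcons ws z) = size ws.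
Proof. by move=> h; rewrite -cats1 index_cat (negbTE h) /= eqxx addn0. Qed.
End RC.

Section Build.
Variables (n : nat) (f : 'I_n -> nat).
Hypothesis Hpf : parking_function f.

Local Notation K := (Kf f).
Local Notation st := (start f).

Lemma start_uniq s s' : st s -> st s' -> f s = f s' -> s = s'.
Proof.
move=> /forallP h /forallP h' e.
case: (ltngtP s s') => [l|l|/val_inj //].
  by move: (h' s); rewrite l e eqxx.
by move: (h s'); rewrite l e eqxx.
Qed.

Definition Inv p (ws : seq 'I_n) : Prop :=
 [/\ size ws = p, uniq ws,
   (forall s, st s -> (s \in ws) = (f s <= p)%N),
   (forall s, st s -> s \in ws -> index s ws = (f s).-1) &
   (forall i l, K i l -> l \in ws -> (i \in ws) && (index i ws < index l ws)%N) ] /\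
 (forall i l j k, K i l -> K j k -> l \in ws -> k \in ws ->
     (index i ws < index j ws)%N -> (index l ws < index k ws)%N) /\
 (forall i l j k, K i l -> K j k -> l \in ws -> j \in ws -> k \notin ws ->
     (index i ws < index j ws)%N).

Lemma Inv0 : Inv 0 [::].
Proof.
split; last by split.
split => // s _; rewrite in_nil; apply/esym/negbTE; rewrite -ltnNge.
by have [/(_ s) /andP[] ] := Hpf.
Qed.

Lemma Inv_step p ws : (p < n)%N -> Inv p ws -> exists ws', Inv p.+1 ws'.
Proof.
move=> pn [[sz un I1 I1' I2] [I3 I4]].
have idx_lt : forall e, e \in ws -> (index e ws < p)%N by move=> e; rewrite -sz index_mem.
case: (boolP [exists e, f e == p.+1]) => [/existsP[e /eqP fe]|noim].
  (* a new chain starts at position p+1 *)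
  have [s0 st0 f0] := start_ex fe.
  have s0n : s0 \notin ws by rewrite I1 // f0 ltnn.
  have ntgt : forall i l, K i l -> l != s0.
    by move=> i l Kil; apply/eqP => e'; move: (Kf_start Kil); rewrite e' st0.
  have tgt_old : forall i l, K i l -> l \in rcons ws s0 -> l \in ws.
    by move=> i l Kil; rewrite mem_rc (negbTE (ntgt _ _ Kil)).
  exists (rcons ws s0); split; last split.
  - split.
    + by rewrite size_rcons sz.
    + by rewrite rcons_uniq s0n un.
    + move=> s sts; rewrite mem_rc I1 // (leq_eqVlt (f s) p.+1) ltnS; congr (_ || _).
      apply/eqP/eqP => [->//|h]; apply: start_uniq => //; by rewrite h f0.
    + move=> s sts; rewrite mem_rc => /orP[/eqP ->|sw]; first by rewrite idx_new // sz f0.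
      by rewrite idx_old // I1'.
    + move=> i l Kil /(tgt_old _ _ Kil) lw; have /andP[iw h] := I2 _ _ Kil lw.
      by rewrite mem_rc iw orbT !idx_old.
  - move=> i l j k Kil Kjk /(tgt_old _ _ Kil) lw /(tgt_old _ _ Kjk) kw.
    have /andP[iw _] := I2 _ _ Kil lw; have /andP[jw _] := I2 _ _ Kjk kw.
    rewrite !idx_old //; exact: I3.
  - move=> i l j k Kil Kjk /(tgt_old _ _ Kil) lw; have /andP[iw _] := I2 _ _ Kil lw.
    rewrite mem_rc => /orP[/eqP ->|jw] kn.
      by rewrite idx_new // idx_old // sz; apply: idx_lt.
    rewrite !idx_old //; apply: I4 Kil Kjk lw jw _.
    by move: kn; rewrite mem_rc negb_or => /andP[].
(* no chain starts at p+1: place the successor of the earliest pending element *)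
have noim' : forall e, f e != p.+1 by move=> e; apply/negP => h; move/existsP: noim; apply; exists e.
pose Pj := fun j : 'I_n => (j \in ws) && [exists k, K j k && (k \notin ws)].
have [j1 Pj1] : exists j, Pj j.
  case: (boolP [exists j, Pj j]) => [/existsP //|/existsPn none]; exfalso.
  have closed : forall e, (f e <= p)%N -> e \in ws.
    apply: (@Kf_ind _ f (fun e => (f e <= p)%N -> e \in ws)).
      by move=> s sts h; rewrite I1.
    move=> i l Kil IH fl.
    have /and3P[_ /eqP fil _] := Kil.
    have iw : i \in ws by apply: IH; rewrite fil.
    move: (none i); rewrite /Pj iw /= => /existsPn /(_ l); rewrite Kil /=.
    by move/negbNE.
  have [_ /(_ p.+1)] := Hpf; rewrite ltn0Sn /= => /(_ pn).
  have : (#|[set e : 'I_n | (f e <= p.+1)%N]| <= size ws)%N.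
    rewrite -(card_uniqP un) -cardsE; apply: subset_leq_card.
    apply/fintype.subsetP => e; rewrite !inE (leq_eqVlt (f e) p.+1) (negbTE (noim' e)) ltnS.
    exact: closed.
  rewrite sz.
  by move=> h1 h2; move: (leq_trans h2 h1); rewrite ltnn.
case: (@arg_minnP _ j1 Pj (fun j => index j ws) Pj1) => j0 /andP[j0w /existsP[k0 /andP[K0 k0n]]] jmin.
have tgt : forall i l, K i l -> l \in rcons ws k0 -> (i \in ws) && ((l == k0) ==> (i == j0)).
  move=> i l Kil; rewrite mem_rc => /orP[/eqP e|lw].
    by rewrite e in Kil; rewrite (Kf_in Kil K0) j0w eqxx implybT.
  have /andP[iw _] := I2 _ _ Kil lw; rewrite iw /=.
  by apply/implyP => /eqP e; rewrite -e lw in k0n.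
exists (rcons ws k0); split; last split.
- split.
  + by rewrite size_rcons sz.
  + by rewrite rcons_uniq k0n un.
  + move=> s sts; rewrite mem_rc I1 // (leq_eqVlt (f s) p.+1) (negbTE (noim' s)) ltnS.
    suff -> : (s == k0) = false by [].
    apply/negbTE/eqP => e; move: (Kf_start K0); by rewrite -e sts.
  + move=> s sts; rewrite mem_rc => /orP[/eqP e|sw].
      by move: (Kf_start K0); rewrite -e sts.
    by rewrite idx_old // I1'.
  + move=> i l Kil lw'; have /andP[iw /implyP Hl] := tgt _ _ Kil lw'.
    rewrite mem_rc iw orbT /= idx_old //.
    move: lw'; rewrite mem_rc => /orP[/eqP e|lw].
      by rewrite e idx_new // sz idx_lt.
    by rewrite idx_old //; have /andP[] := I2 _ _ Kil lw.
- move=> i l j k Kil Kjk lw' kw'.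
  have /andP[iw /implyP Hl] := tgt _ _ Kil lw'.
  have /andP[jw /implyP Hk] := tgt _ _ Kjk kw'.
  rewrite (idx_old _ iw) (idx_old _ jw).
  move: lw' kw'; rewrite !mem_rc => /orP[/eqP el|lw] /orP[/eqP ek|kw].
  + by move: (Hl (introT eqP el)) (Hk (introT eqP ek)) => /eqP -> /eqP ->; rewrite ltnn.
  + rewrite el in Kil; rewrite (Kf_in Kil K0) => h; exfalso.
    have := I4 _ _ _ _ Kjk K0 kw j0w k0n; rewrite ltnNge (ltnW h) //.
  + by rewrite ek idx_new // sz idx_old // idx_lt.
  + by rewrite !idx_old //; exact: I3.
- move=> i l j k Kil Kjk lw' jw'.
  have /andP[iw /implyP Hl] := tgt _ _ Kil lw'.
  rewrite (idx_old _ iw); move: jw'; rewrite mem_rc => /orP[/eqP ej|jw] kn'.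
    by rewrite ej idx_new // sz idx_lt.
  rewrite idx_old //.
  have kn : k \notin ws by move: kn'; rewrite mem_rc negb_or => /andP[].
  move: lw'; rewrite mem_rc => /orP[/eqP el|lw]; last exact: I4 Kil Kjk lw jw kn.
  rewrite el in Kil; rewrite (Kf_in Kil K0).
  have Pjj : Pj j by rewrite /Pj jw; apply/existsP; exists k; rewrite Kjk kn.
  have := jmin _ Pjj; rewrite leq_eqVlt => /orP[/eqP e|//].
  have jj : j0 = j by exact: (index_inj j0 j0w jw e).
  rewrite jj in K0; have ek := Kf_out K0 Kjk.
  by move: kn'; rewrite mem_rc ek eqxx.
Qed.

Lemma Inv_ex : exists ws, Inv n ws.
Proof.
suff : forall p, (p <= n)%N -> exists ws, Inv p ws by apply.
elim=> [|p IH] pn; first by exists [::]; exact: Inv0.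
have [ws Hws] := IH (ltnW pn); exact: Inv_step pn Hws.
Qed.

End Build.


Lemma card_idx n (s : seq 'I_n) j : uniq s -> size s = n -> (j <= n)%N ->
  #|[set e | ((index e s).+1 <= j)%N]| = j.
Proof.
move=> us ss jn.
have all_in : forall e, e \in s.
  move=> e; have [_ ->] := @uniq_min_size _ s (enum 'I_n) us (fun e _ => mem_enum _ e)
    (eq_leq (etrans (size_enum_ord n) (esym ss))).
  by rewrite mem_enum.
have -> : [set e | ((index e s).+1 <= j)%N] = [set e | e \in take j s].
  by apply/setP => e; rewrite !inE in_take.
by rewrite cardsE (card_uniqP _) ?take_uniq // size_take ss
   (ltn_neqAle j n) jn andbT; case: eqP => // ->.
Qed.

Section Surj.
Variables (R : realType) (n : nat) (G : rel 'I_n) (f : 'I_n -> nat).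
Hypothesis Hpf : parking_function f.
Hypothesis Hc : G_compatible G f.

Local Notation K := (Kf f).
Local Notation st := (start f).

Lemma K_G i l : K i l -> G i l.
Proof.
move=> /and3P[il /eqP fil /forallP H]; apply: Hc => // k /andP[ik kl] e.
by move: (H k); rewrite ik kl e eqxx.
Qed.

Lemma surj_main : exists2 x : 'rV[R]_n, shi_complement G x & Defs.sigma G x =1 f.
Proof.
have [ws [[sz un I1 I1' I2] [I3 _]]] := Inv_ex Hpf.
have all_in : forall e, e \in ws.
  move=> e; have [_ ->] := @uniq_min_size _ ws (enum 'I_n) un (fun e _ => mem_enum _ e)
    (eq_leq (etrans (size_enum_ord n) (esym sz))).
  by rewrite mem_enum.
pose P := fun e => (index e ws).+1.
have Pinj : injective P by move=> a b [] /(index_inj a (all_in a) (all_in b)).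
have Pr : forall e, (1 <= P e <= n)%N by move=> e; rewrite /P ltnS /=; have := index_mem e ws; rewrite all_in sz.
have Pst : forall s, st s -> P s = f s.
  move=> s sts; rewrite /P I1' // prednK //; by have [/(_ s)/andP[]] := Hpf.
have PK : forall i l, K i l -> (P i < P l)%N.
  by move=> i l Kil; have /andP[_ h] := I2 _ _ Kil (all_in l).
have PM : forall i l j k, K i l -> K j k -> (P i < P j)%N -> (P l < P k)%N.
  move=> i l j k Kil Kjk; rewrite /P !ltnS; exact: I3.
pose s := fun q => \max_(jk : 'I_n * 'I_n | K jk.1 jk.2 && (P jk.2 <= q)%N) P jk.1.
have slt : forall q, (1 <= q)%N -> (s q < q)%N.
  move=> q q1.
  have : (s q <= q.-1)%N.
    apply/bigmax_leqP => -[j k] /= /andP[Kjk kq].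
    have := PK _ _ Kjk; move: kq; clear; lia.
  move: q1; clear; lia.
have smono : forall q q', (q <= q')%N -> (s q <= s q')%N.
  move=> q q' qq; apply/bigmax_leqP => -[j k] /= /andP[Kjk kq].
  by apply: (@leq_bigmax_cond _ _ (fun jk => P jk.1) (j, k)); rewrite /= Kjk (leq_trans kq qq).
have sP : forall p q, (1 <= p)%N -> (p <= s q)%N =
    [exists j, exists k, [&& K j k, (p <= P j)%N & (P k <= q)%N]].
  move=> p q p1; apply/idP/idP.
    move=> ps; case: (pickP (fun jk : 'I_n * 'I_n => K jk.1 jk.2 && (P jk.2 <= q)%N)) => [jk0 H0|H0].
      have cA : (0 < #|(fun jk : 'I_n * 'I_n => K jk.1 jk.2 && (P jk.2 <= q)%N)|)%N.
        by apply/card_gt0P; exists jk0.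
      have [[j k] /= /andP[Kjk kq] E] :=
        @eq_bigmax_cond _ (fun jk : 'I_n * 'I_n => K jk.1 jk.2 && (P jk.2 <= q)%N) (fun jk => P jk.1) cA.
      apply/existsP; exists j; apply/existsP; exists k; rewrite Kjk kq andbT.
      by move: ps; rewrite /s E.
    move: ps; rewrite /s big_pred0 // leqn0 => /eqP p0; by rewrite p0 in p1.
  move=> /existsP[j /existsP[k /and3P[Kjk pj kq]]].
  apply: leq_trans pj _.
  by apply: (@leq_bigmax_cond _ _ (fun jk => P jk.1) (j, k)); rewrite /= Kjk kq.
have [t Ht] := @thresh_ex R s slt smono n.
pose x : 'rV[R]_n := \row_(e < n) (- t (P e)).
have xE : forall e, x ord0 e = - t (P e) by move=> e; rewrite mxE.
have tlt : forall a b, (P a < P b)%N -> t (P a) < t (P b).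
  move=> a b ab; have /andP[a1 _] := Pr a; have /andP[_ bn] := Pr b.
  by have [] := Ht _ _ a1 ab bn.
have tle : forall a b, (P a <= P b)%N = (t (P a) <= t (P b)).
  move=> a b; case: (ltngtP (P a) (P b)) => [h|h|/Pinj ->]; last by rewrite lexx.
    by rewrite ltW // tlt.
  by apply/esym; rewrite leNgt tlt.
have diffE : forall a b, x ord0 a - x ord0 b = t (P b) - t (P a).
  by move=> a b; rewrite !xE opprK addrC.
have arcE : forall a b, (1 < x ord0 a - x ord0 b) =
    [exists j, exists k, [&& K j k, (P a <= P j)%N & (P k <= P b)%N]].
  move=> a b; rewrite diffE.
  case: (ltnP (P a) (P b)) => ab.
    have /andP[a1 _] := Pr a; have /andP[_ bn] := Pr b.
    have [_ h1 h2] := Ht _ _ a1 ab bn.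
    rewrite -sP //; case: (leqP (P a) (s (P b))) => h.
      by rewrite h1.
    by apply/negbTE; rewrite -leNgt; apply: ltW; apply: h2.
  apply/idP/idP.
    move=> h; exfalso; move: h; apply/negP; rewrite -leNgt.
    apply: (@le_trans _ _ 0); last exact: ler01.
    by rewrite subr_le0 -tle.
  move=> /existsP[j /existsP[k /and3P[Kjk aj kb]]]; exfalso.
  have := PK _ _ Kjk; move: (leq_trans aj (leq_trans (ltnW (PK _ _ Kjk)) kb)) => h1 h2.
  have := leq_trans kb ab; move: aj h2; lia.
have Cx : shi_complement G x.
  move=> i j ij; rewrite diffE; split.
    rewrite subr_eq0; apply/negP => /eqP e.
    have : P j = P i by apply/eqP; rewrite eqn_leq !tle e lexx.
    by move/Pinj => e'; rewrite e' ltnn in ij.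
  move=> Gij; case: (ltngtP (P i) (P j)) => [h|h|/Pinj e]; last by rewrite e ltnn in ij.
    have /andP[a1 _] := Pr i; have /andP[_ bn] := Pr j.
    have [_ h1 h2] := Ht _ _ a1 h bn.
    case: (leqP (P i) (s (P j))) => h'; first by rewrite gt_eqF // h1.
    by rewrite lt_eqF // h2.
  rewrite lt_eqF //; apply: (@lt_trans _ _ 0); last exact: ltr01.
  by rewrite subr_lt0 tlt.
have posE : forall e, Defs.pos x e = P e.
  move=> e; have /andP[_ en] := pos_range x e.
  rewrite -{1}(card_pos_le x en).
  have -> : [set d | (Defs.pos x d <= Defs.pos x e)%N] = [set d | (P d <= P e)%N].
    by apply/setP => d; rewrite !inE (pos_leP Cx) !xE lerN2 -tle.
  have /andP[_ Pen] := Pr e.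
  exact: card_idx.
have arcxE : forall a b, Defs.arc G x a b =
    [&& (a < b)%N, G a b & [exists j, exists k, [&& K j k, (P a <= P j)%N & (P k <= P b)%N]]].
  by move=> a b; rewrite /Defs.arc arcE.
have K_arc : forall j k, K j k -> Defs.arc G x j k.
  move=> j k Kjk; rewrite arcxE K_G //.
  have /and3P[-> _ _] := Kjk; rewrite /=; apply/existsP; exists j; apply/existsP; exists k.
  by rewrite Kjk !leqnn.
have keptE : forall i l, Defs.kept G x i l = K i l.
  move=> i l; apply/idP/idP => [kil|Kil].
    have := kept_arc kil; rewrite arcxE => /and3P[_ _ /existsP[j /existsP[k /and3P[Kjk h1 h2]]]].
    rewrite -!posE in h1 h2.
    by have [<- <-] := kept_no kil (K_arc _ _ Kjk) h1 h2.
  rewrite /Defs.kept K_arc //=; apply/existsPn => j; apply/existsPn => k.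
  apply/negP => /and4P[Ajk ne h1 h2].
  move: Ajk; rewrite arcxE => /and3P[_ _ /existsP[j' /existsP[k' /and3P[K' h1' h2']]]].
  rewrite !posE in h1 h2.
  have eq1 : j' = i.
    case: (ltngtP (P i) (P j')) (leq_trans h1 h1') => // [h _|/Pinj -> //].
    have := PM _ _ _ _ Kil K' h; rewrite ltnNge (leq_trans h2' h2) //.
  rewrite eq1 in K'; have eq2 := Kf_out Kil K'.
  rewrite eq1 in h1'; rewrite -eq2 in h2'.
  have ej : j = i by apply: Pinj; apply/eqP; rewrite eqn_leq h1 h1'.
  have ek : k = l by apply: Pinj; apply/eqP; rewrite eqn_leq h2 h2'.
  by rewrite ej ek eqxx in ne.
pose Ks := fun a b => K a b || K b a.
have scE : forall a b, Defs.same_chain G x a b = connect Ks a b.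
  move=> a b; rewrite /Defs.same_chain; apply: eq_connect => c d /=; by rewrite !keptE.
have conn_f : forall a b, connect Ks a b -> f a = f b.
  move=> a b h; apply/eqP; move: a b h.
  apply: (@connect_mono _ Ks (fun a b : 'I_n => f a == f b)).
  - by move=> a.
  - by move=> b' a' c /eqP -> /eqP ->.
  - by move=> a b /orP[|] /and3P[_ /eqP -> _].
have start_conn : forall e s0, st s0 -> f s0 = f e -> connect Ks s0 e.
  apply: (@Kf_ind _ f (fun e => forall s0, st s0 -> f s0 = f e -> connect Ks s0 e)).
    by move=> s1 st1 s0 st0 e; rewrite (start_uniq st0 st1 e) connect0.
  move=> i l Kil IH s0 st0 e.
  have /and3P[_ /eqP fil _] := Kil.
  apply: connect_trans (IH s0 st0 _) (connect1 _); first by rewrite e fil.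
  by rewrite /Ks Kil.
have start_min : forall e s0, st s0 -> f s0 = f e -> (P s0 <= P e)%N.
  apply: (@Kf_ind _ f (fun e => forall s0, st s0 -> f s0 = f e -> (P s0 <= P e)%N)).
    by move=> s1 st1 s0 st0 e; rewrite (start_uniq st0 st1 e).
  move=> i l Kil IH s0 st0 e.
  have /and3P[_ /eqP fil _] := Kil.
  apply: leq_trans (IH s0 st0 _) (ltnW (PK _ _ Kil)); by rewrite e fil.
exists x => // e.
have [s0 st0 f0] := start_ex (erefl (f e)).
have Ks_sym : connect_sym Ks by apply: sym_connect_sym => a b; rewrite /Ks orbC.
have sc0 : Defs.same_chain G x e s0.
  by rewrite scE Ks_sym; apply: start_conn.
have [m Hm [E Hmin]] := @bigmin_ex _ (Defs.same_chain G x e) (Defs.pos x) n e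
  (connect0 _ e) (fun j _ => proj2 (andP (pos_range x j))).
rewrite /Defs.sigma E posE.
have fm : f m = f e by move: Hm; rewrite scE => /conn_f ->.
apply/eqP; rewrite eqn_leq; apply/andP; split.
  by have := Hmin _ sc0; rewrite !posE (Pst s0 st0) f0.
by rewrite -f0 -(Pst s0 st0); apply: start_min; rewrite // fm.
Qed.

End Surj.


Local Open Scope classical_set_scope.

Theorem theorem3p1 (R : realType) (n : nat) (G : rel 'I_n) :
  (1 <= n)%N -> symmetric G -> irreflexive G ->
  (* sigma is well defined on regions *)
  (forall x y : 'rV[R]_n, shi_complement G x -> shi_region G x y ->
     sigma G x =1 sigma G y) /\
  (* injective on regions *)
  (forall x y : 'rV[R]_n, shi_complement G x -> shi_complement G y ->
     sigma G x =1 sigma G y -> shi_region G x y) /\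
  (* lands in the G-compatible parking functions *)
  (forall x : 'rV[R]_n, shi_complement G x ->
     parking_function (sigma G x) /\ G_compatible G (sigma G x)) /\
  (* surjective *)
  (forall f : 'I_n -> nat, parking_function f -> G_compatible G f ->
     exists2 x : 'rV[R]_n, shi_complement G x & sigma G x =1 f).
Proof.
move=> n1 Gsym Girr; split; last split; last split.
- move=> x y Cx Rxy.
  have Cy : shi_complement G y := connected_component_sub Rxy.
  apply: (sigma_signs Cx Cy); split.
    move=> i j ij; apply: (@comp_sign R n G x y i j 0 Cx Rxy) => z Cz.
    by have [] := Cz i j ij.
  move=> i j ij Gij; apply: (@comp_sign R n G x y i j 1 Cx Rxy) => z Cz.
  by have [_ ] := Cz i j ij; apply.
- move=> x y Cx Cy E.
  have [S0 S1] := sigma_inj_signs Cx Cy E.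
  exact: (@signs_region R n G x y Cx Cy S0 S1).
- move=> x Cx; split; [exact: (sigma_parking G x)|exact: (sigma_compat Cx)].
- move=> f Hpf Hc; exact: surj_main Hpf Hc.
Qed.
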